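(* Let $V,W$ be complex vector spaces of dimension $n+1$ and let $f:\mathbb{P}(V)\to\mathbb{P}(W)$ be a morphism given in coordinates by $y_j=f_j(x)=\sum_{|I|=m}a_{j,I}x^I$, $j=0,\dots,n$, homogeneous of degree $m$ with no common zero other than the origin. Suppose that for integer vectors $c=(c_0,\dots,c_n)$, $b=(b_0,\dots,b_n)$ and a constant $C$ one has $\langle c,I\rangle-b_j=C$ whenever $a_{j,I}\neq0$ (equivalently, $g_{b,c}(\lambda)=(\mathrm{diag}(\lambda^{c_i}),\mathrm{diag}(\lambda^{b_i}))$ stabilizes $f$ in $PGL(V)\times PGL(W)$), and let $\Pi_j=\{I\in\mathbb{R}^{n+1}:\langle c,I\rangle-b_j=C\}$. Then every vertex of $\Delta$ is contained in one of the hyperplanes $\Pi_j$.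
   Context: $x^I=x_0^{i_0}\cdots x_n^{i_n}$, $|I|=\sum i_k$, $\langle c,I\rangle=\sum c_ki_k$. $\Delta\subset\mathbb{R}^{n+1}$ is the simplex with vertices $p_i=m e_i$, $i=0,\dots,n$, where $e_i$ are the standard basis vectors. *)

(* Defs.v *)
From mathcomp Require Import all_boot all_order all_algebra.
From mathcomp Require Import complex Rstruct.
Set Implicit Arguments. Unset Strict Implicit. Unset Printing Implicit Defensive.
Import Order.TTheory GRing.Theory Num.Theory.
Local Open Scope ring_scope.

Definition RR : rcfType := Rdefinitions.R.
Definition CC : closedFieldType := (Rdefinitions.R)[i].

Definition mindex (n m : nat) := {ffun 'I_n.+1 -> 'I_m.+1}.

Definition mdeg (n m : nat) (I : mindex n m) : nat := (\sum_(k < n.+1) (I k : nat))%N.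

Definition monom (n m : nat) (x : 'I_n.+1 -> CC) (I : mindex n m) : CC :=
  \prod_(k < n.+1) x k ^+ (I k : nat).

Definition fcomp (n m : nat) (a : 'I_n.+1 -> mindex n m -> CC) (j : 'I_n.+1)
  (x : 'I_n.+1 -> CC) : CC :=
  \sum_(I : mindex n m | mdeg I == m) a j I * monom x I.

Definition no_common_zero (n m : nat) (a : 'I_n.+1 -> mindex n m -> CC) : Prop :=
  forall x : 'I_n.+1 -> CC, (forall j, fcomp a j x = 0) -> forall k, x k = 0.

Definition pair_int (n m : nat) (c : 'I_n.+1 -> int) (I : mindex n m) : int :=
  \sum_(k < n.+1) c k * (I k : nat)%:Z.

Definition Pi (n : nat) (c b : 'I_n.+1 -> int) (C : int) (j : 'I_n.+1)
  (p : 'I_n.+1 -> RR) : Prop :=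
  \sum_(k < n.+1) (c k)%:~R * p k - (b j)%:~R = (C%:~R : RR).

(* the vertex p_i = m e_i of the simplex Delta *)
Definition simplex_vertex (n m : nat) (i : 'I_n.+1) : 'I_n.+1 -> RR :=
  fun k => if k == i then (m%:R : RR) else 0.

(* Main.v *)
Require Import Defs.
From mathcomp Require Import all_boot all_order all_algebra.
From mathcomp Require Import complex Rstruct.
Import Order.TTheory GRing.Theory Num.Theory.
Local Open Scope ring_scope.

Theorem mainTheorem4 (n m : nat) (a : 'I_n.+1 -> mindex n m -> CC)
  (c b : 'I_n.+1 -> int) (C : int) :
  no_common_zero a ->
  (forall (j : 'I_n.+1) (I : mindex n m),
      mdeg I = m -> a j I != 0 -> pair_int c I - b j = C) ->
  forall i : 'I_n.+1, exists j : 'I_n.+1, Pi c b C j (simplex_vertex m i).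
Proof.
move=> Hnz Hst i.
pose x : 'I_n.+1 -> CC := fun k => if k == i then 1 else 0.
have [j Hj] : exists j, fcomp a j x != 0.
  case: (boolP [exists j, fcomp a j x != 0]) => [/existsP//|/existsPn H].
  exfalso; have := Hnz x (fun j => eqP (negPn (H j))) i.
  by rewrite /x eqxx; apply/eqP; rewrite oner_eq0.
have [I /andP[HI Hne]] : exists I, (mdeg I == m) && (a j I * monom x I != 0).
  case: (boolP [exists I, (mdeg I == m) && (a j I * monom x I != 0)])
    => [/existsP//|/existsPn H].
  exfalso; move: Hj; rewrite /fcomp big1 ?eqxx // => I0 HI0.
  by have := H I0; rewrite HI0 /= => /negPn/eqP.
have [Ha Hm] : a j I != 0 /\ monom x I != 0.
  by split; apply: contraNneq Hne => ->; rewrite ?mul0r ?mulr0.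
have Hk : forall k, k != i -> (I k : nat) = 0%N.
  move=> k Hki; apply/eqP; apply: contraNT Hm => HIk.
  rewrite /monom (bigD1 k) //= /x (negbTE Hki) expr0n (negbTE HIk) mul0r //.
have HIi : (I i : nat) = m.
  move/eqP: HI; rewrite /mdeg (bigD1 i) //= big1 ?addn0 // => k Hki; exact: Hk.
have := Hst j I (eqP HI) Ha.
rewrite /pair_int (bigD1 i) //= big1 ?addr0; last first.
  by move=> k Hki; rewrite Hk // mulr0.
rewrite HIi => HC.
exists j; rewrite /Pi /simplex_vertex (bigD1 i) //= eqxx big1 ?addr0; last first.
  by move=> k Hki; rewrite (negbTE Hki) mulr0.
by rewrite -HC rmorphB rmorphM /=.
Qed.
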